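(* Let $k \ge 2$ and $d \ge 1$ be integers and let $\varepsilon < 1/(k-1)$, $\delta := (k-1)\varepsilon/2$. Let $A$ and $B$ be random variables such that $A$ is uniformly distributed over $[2k]$ and, for each $a \in [2k]$, conditioned on $A=a$, $B$ is distributed according to a probability distribution $P_a$ on $[d]$ (viewed as a vector in $\mathbb{R}^d$). Assume that for all $r \in [k-1]$, $$\frac{1}{2k} \left\| \sum_{a=1}^r (P_a + P_{a+k}) - \sum_{a=r+1}^k (P_a + P_{a+k}) \right\|_1 \ge 1-\varepsilon.$$ Then $I(A:B) \ge \log k - \delta \log (k-1) - H(\delta)$.
   Context: $[m]$ denotes $\{1,\ldots,m\}$. All logarithms are base $2$. $H(\delta) := -\delta \log \delta - (1-\delta)\log(1-\delta)$ is the binary entropy function (with $0\log 0 = 0$). $I(A:B) = H(A)+H(B)-H(A,B)$ is the mutual information, where $H$ of a random variable denotes its Shannon entropy (base $2$). $\|\cdot\|_1$ is the $\ell_1$ norm on $\mathbb{R}^d$. *)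

(* Defs.v *)
From mathcomp Require Import all_boot all_order all_algebra.
From mathcomp Require Import all_classical all_reals all_analysis.
Set Implicit Arguments. Unset Strict Implicit. Unset Printing Implicit Defensive.
Import Order.TTheory GRing.Theory Num.Theory.
Local Open Scope ring_scope.

Section Info.
Variable R : realType.

Definition log2 (x : R) : R := ln x / ln 2.

Definition negxlogx (x : R) : R := if x == 0 then 0 else - (x * log2 x).

Definition entropy (T : finType) (p : T -> R) : R := \sum_(t : T) negxlogx (p t).

Definition binH (x : R) : R := negxlogx x + negxlogx (1 - x).

Definition mutinfo (TA TB : finType) (pAB : TA -> TB -> R) : R :=
  entropy (fun a => \sum_(b : TB) pAB a b)
  + entropy (fun b => \sum_(a : TA) pAB a b)
  - entropy (fun ab : TA * TB => pAB ab.1 ab.2).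

Definition l1norm (d : nat) (v : 'I_d -> R) : R := \sum_(i < d) `|v i|.

Definition is_distr (d : nat) (p : 'I_d -> R) : Prop :=
  (forall i, 0 <= p i) /\ \sum_(i < d) p i = 1.

End Info.

(* Main.v *)
Require Import Defs.
From mathcomp Require Import all_boot all_order all_algebra.
From mathcomp Require Import all_classical all_reals all_analysis.
From mathcomp Require Import ring lra zify.
Import Order.TTheory GRing.Theory Num.Theory.
Local Open Scope ring_scope.

Set Implicit Arguments. Unset Strict Implicit.
Section H.
Variable R : realType.

Lemma ln_le_sub1 (x : R) : 0 < x -> ln x <= x - 1.
Proof.
move=> x0; have h := le_ln1Dx (x := x - 1).
have e : 1 + (x - 1) = x by rewrite addrC subrK.
by rewrite e in h; apply: h; lra.
Qed.

Lemma ln2_gt0 : 0 < ln (2 : R).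
Proof. by apply: ln_gt0; lra. Qed.

Lemma gibbs_term (x w : R) : 0 <= x -> 0 <= w -> (0 < x -> 0 < w) ->
  - (x * log2 x) <= - (x * log2 w) + (w - x) / ln 2.
Proof.
move=> x0 w0 xw; have l2 := ln2_gt0.
have [->|xp] := eqVneq x 0.
  by rewrite !mul0r oppr0 add0r addr0 divr_ge0 // ltW.
have xp' : 0 < x by rewrite lt_def xp x0.
have wp := xw xp'.
have h : ln w - ln x <= w / x - 1.
  by rewrite -ln_div ?posrE //; apply: ln_le_sub1; rewrite divr_gt0.
have h2 : x * (ln w - ln x) <= w - x.
  have -> : w - x = x * (w / x - 1) by field; rewrite gt_eqF.
  by rewrite ler_wpM2l.
rewrite /log2 -subr_ge0.
have -> : - (x * (ln w / ln 2)) + (w - x) / ln 2 - - (x * (ln x / ln 2))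
   = (w - x - x * (ln w - ln x)) / ln 2 by field; rewrite gt_eqF.
by rewrite divr_ge0 ?subr_ge0 // ltW.
Qed.

Lemma gibbs (I : finType) (x w : I -> R) :
  (forall i, 0 <= x i) -> (forall i, 0 <= w i) -> (forall i, 0 < x i -> 0 < w i) ->
  \sum_i w i <= \sum_i x i ->
  \sum_i - (x i * log2 (x i)) <= \sum_i - (x i * log2 (w i)).
Proof.
move=> x0 w0 xw hs.
apply: (@le_trans _ _ (\sum_i (- (x i * log2 (w i)) + (w i - x i) / ln 2))).
  by apply: ler_sum => i _; apply: gibbs_term => //; apply: xw.
rewrite big_split /= -mulr_suml sumrB.
rewrite gerDl; apply: mulr_le0_ge0; first by rewrite subr_le0.
by rewrite invr_ge0 ltW // ln2_gt0.
Qed.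


Lemma sum_nat_ge0 (z : nat -> R) m n :
  (forall j, (m <= j < n)%N -> 0 <= z j) -> 0 <= \sum_(m <= j < n) z j.
Proof.
move=> h; rewrite big_nat_cond; apply: sumr_ge0 => j /andP[hj _]; exact: h.
Qed.

Lemma term_le_sum (z : nat -> R) m n i :
  (forall j, (m <= j < n)%N -> 0 <= z j) -> (m <= i < n)%N ->
  z i <= \sum_(m <= j < n) z j.
Proof.
move=> h /andP[hmi hin].
rewrite (big_cat_nat (n := i)) //; last exact: ltnW.
rewrite (big_ltn (m := i)) //=.
have h1 : 0 <= \sum_(m <= j < i) z j.
  by apply: sum_nat_ge0 => j /andP[a b]; apply: h; rewrite a (ltn_trans b).
have h2 : 0 <= \sum_(i.+1 <= j < n) z j.
  by apply: sum_nat_ge0 => j /andP[a b]; apply: h; rewrite b (leq_trans hmi) // ltnW.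
lra.
Qed.

Lemma min2 (v S T : R) : v <= S -> v <= T -> 2 * v <= S + T - `|S - T|.
Proof.
move=> hS hT; have [h|h] := lerP 0 (S - T).
  by rewrite ger0_norm //; lra.
by rewrite ltr0_norm //; lra.
Qed.

Lemma max_exists (f : nat -> R) n :
  exists m, (1 <= m <= n.+1)%N /\ forall j, (1 <= j <= n.+1)%N -> f j <= f m.
Proof.
elim: n => [|n [m [hm hmax]]].
  exists 1%N; split => // j /andP[a b].
  by have -> : j = 1%N by apply/eqP; rewrite eqn_leq a b.
have [le|lt] := lerP (f n.+2) (f m).
  exists m; split; first by case/andP: hm => a b; rewrite a ltnW.
  move=> j /andP[a b]; rewrite leq_eqVlt in b; case/orP: b => [/eqP ->//|b].
  by apply: hmax; rewrite a.
exists n.+2; split; first by rewrite leqnn. move=> j /andP[a b]; rewrite leq_eqVlt in b.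
case/orP: b => [/eqP ->//|b].
by apply: (le_trans (hmax j _)); [rewrite a | apply: ltW].
Qed.

Lemma comb (z : nat -> R) k cs :
  (forall c, (1 <= c <= k)%N -> 0 <= z c) -> (1 <= cs <= k)%N ->
  (forall c, (1 <= c <= k)%N -> z c <= z cs) ->
  2 * (\sum_(1 <= c < k.+1) z c - z cs) <=
  \sum_(1 <= r < k) (\sum_(1 <= c < k.+1) z c
      - `|\sum_(1 <= a < r.+1) z a - \sum_(r.+1 <= a < k.+1) z a|).
Proof.
move=> z0 /andP[c1 ck] zmax.
have tls : forall a b i, (1 <= a)%N -> (b <= k.+1)%N -> (a <= i < b)%N ->
    z i <= \sum_(a <= j < b) z j.
  move=> a b i ha hb hi; apply: term_le_sum => // j /andP[j1 j2]; apply: z0.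
  by rewrite (leq_trans ha j1) -ltnS (leq_trans j2 hb).
pose g r := if (r < cs)%N then z r else z r.+1.
have step : forall r, (1 <= r < k)%N -> 2 * g r <=
   \sum_(1 <= c < k.+1) z c
      - `|\sum_(1 <= a < r.+1) z a - \sum_(r.+1 <= a < k.+1) z a|.
  move=> r /andP[r1 rk].
  rewrite (big_cat_nat (n := r.+1)) //=; last by rewrite ltnW.
  apply: min2; rewrite /g; case: ifP => hr.
  - by apply: tls; lia.
  - apply: (@le_trans _ _ (z cs)); first by apply: zmax; lia.
    by apply: tls; lia.
  - apply: (@le_trans _ _ (z cs)); first by apply: zmax; lia.
    by apply: tls; lia.
  - by apply: tls; lia.
apply: (le_trans _ (ler_sum_nat step)).
rewrite -mulr_sumr ler_wpM2l //.
rewrite (big_cat_nat (n := cs) (m := 1%N) (p := k.+1)) /=; try lia.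
have [csk|csk] := ltnP cs k.
  rewrite (big_cat_nat (n := cs) (m := 1%N) (p := k)) /=; try lia.
  rewrite (big_ltn (m := cs)) ?ltnS //= (@big_add1 _ _ _ cs) /=.
  have e1 : \sum_(1 <= i < cs) g i = \sum_(1 <= i < cs) z i.
    by apply: eq_big_nat => i /andP[_ h]; rewrite /g h.
  have e2 : \sum_(cs <= i < k) g i = \sum_(cs <= i < k) z i.+1.
    by apply: eq_big_nat => i /andP[h _]; rewrite /g ltnNge h.
  rewrite e1 e2. lra.
have ecs : cs = k by lia.
rewrite ecs (big_ltn (m := k)) // (big_geq (m := k.+1)) // addr0.
have e1 : \sum_(1 <= i < k) g i = \sum_(1 <= i < k) z i.
  by apply: eq_big_nat => i /andP[_ h]; rewrite /g ecs h.
rewrite e1; lra.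
Qed.


Lemma sum_single (f : nat -> R) k j : (1 <= j <= 2 * k)%N ->
  \sum_(a < (2 * k)%N) (if a.+1 == j then f a.+1 else 0) = f j.
Proof.
move=> hj; rewrite -big_mkcond /=.
rewrite (eq_bigl (fun a : 'I_(2 * k)%N => a == j.-1 :> nat)); last first.
  by move=> a /=; apply/eqP/eqP => h; lia.
rewrite (big_ord1_eq _ (fun a => f a.+1)); case: ifP => h; last by lia.
by congr f; lia.
Qed.

Lemma sum_pair_ord (f : nat -> R) k c : (1 <= c <= k)%N ->
  \sum_(a < (2 * k)%N) (if (a.+1 == c) || (a.+1 == (c + k)%N) then f a.+1 else 0)
  = f c + f (c + k)%N.
Proof.
move=> hc.
rewrite (eq_bigr (fun a : 'I_(2 * k)%N => (if a.+1 == c then f a.+1 else 0)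
   + (if a.+1 == (c + k)%N then f a.+1 else 0))); last first.
  move=> a _; case: eqP => h1; case: eqP => h2 //=; try lia.
  by rewrite addr0. by rewrite add0r. by rewrite addr0.
by rewrite big_split /= !sum_single //; lia.
Qed.

Lemma sum_split2 (f : nat -> R) k :
  \sum_(1 <= c < k.+1) (f c + f (c + k)%N) = \sum_(a < (2 * k)%N) f a.+1.
Proof.
rewrite big_split /= -(big_mkord xpredT (fun a => f a.+1)) [RHS](big_cat_nat (n := k)) /=; try lia.
rewrite [X in X + _](@big_add1 _ _ _ 0) /=; congr (_ + _).
rewrite (@big_add1 _ _ _ 0) /=.
have h := big_addn 0 (2 * k) k xpredT (fun a => f a.+1).
rewrite add0n in h; rewrite h.
have -> : (2 * k - k = k)%N by lia.
by apply: eq_bigr => i _; rewrite addSn.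
Qed.


Lemma negxlogxE (y : R) : negxlogx y = - (y * log2 y).
Proof. by rewrite /negxlogx; case: eqP => [->|//]; rewrite mul0r oppr0. Qed.

Lemma log2_2 : log2 (2 : R) = 1.
Proof. by rewrite /log2 divff // gt_eqF // ln2_gt0. Qed.

Lemma log2M (a b : R) : 0 < a -> 0 < b -> log2 (a * b) = log2 a + log2 b.
Proof. by move=> a0 b0; rewrite /log2 lnM ?posrE // mulrDl. Qed.

Lemma log2V (a : R) : 0 < a -> log2 (a^-1) = - log2 a.
Proof. by move=> a0; rewrite /log2 lnV ?posrE // mulNr. Qed.


Lemma final_ineq (dl M kk : R) : 0 <= dl -> dl < 1/2 -> 1 - dl <= M -> M <= 1 ->
  1 <= kk ->
  - log2 (dl / (2 * kk)) + (- log2 ((1 - dl) / 2) - - log2 (dl / (2 * kk))) * M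
  <= 1 + dl * log2 kk + binH dl.
Proof.
move=> d0 d12 hM1 hM2 hkk.
have l2 := ln2_gt0.
have [dz|dp] := eqVneq dl 0.
  rewrite dz in hM1 *.
  have -> : M = 1 by apply/eqP; rewrite eq_le hM2 /=; lra.
  rewrite mulr1 addrC subrK subr0 /binH subr0 !negxlogxE.
  have h2 : (2:R) \is Num.pos by rewrite posrE; lra.
  rewrite /log2 ln1 div1r (lnV h2).
  rewrite mulNr opprK divff ?gt_eqF //; lra.
have dp' : 0 < dl by rewrite lt_def dp d0.
have k0 : 0 < kk by lra.
have e1 : log2 ((1 - dl) / 2) = log2 (1 - dl) - 1.
  by rewrite log2M ?invr_gt0 ?log2V ?log2_2 //; lra.
have e2 : log2 (dl / (2 * kk)) = log2 dl - 1 - log2 kk.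
  rewrite log2M ?invr_gt0 ?mulr_gt0 // log2V ?mulr_gt0 // log2M // log2_2; lra.
have hle : log2 dl <= log2 (1 - dl) + log2 kk.
  rewrite -log2M; try lra.
  rewrite /log2 ler_pM2r ?invr_gt0 // ler_ln ?posrE; try nra.
rewrite e1 e2 /binH !negxlogxE.
have h : 0 <= (log2 kk - log2 dl + log2 (1 - dl)) * (M - 1 + dl).
  by apply: mulr_ge0; lra.
nra.
Qed.

End H.

Theorem mainTheorem2 (R : realType) (k d : nat) (eps : R) (P : nat -> 'I_d -> R) :
  (2 <= k)%N -> (1 <= d)%N ->
  eps < 1 / (k%:R - 1) ->
  (forall a, (1 <= a <= 2 * k)%N -> is_distr (P a)) ->
  (forall r, (1 <= r <= k - 1)%N ->
     1 / (2 * k)%:R *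
       l1norm (fun b : 'I_d =>
         \sum_(1 <= a < r.+1) (P a b + P (a + k)%N b)
         - \sum_(r.+1 <= a < k.+1) (P a b + P (a + k)%N b))
     >= 1 - eps) ->
  let delta := (k%:R - 1) * eps / 2 in
  mutinfo (fun (a : 'I_(2 * k)) (b : 'I_d) => P a.+1 b / (2 * k)%:R)
  >= log2 k%:R - delta * log2 (k%:R - 1) - binH delta.
Proof.
move=> k2 d1 heps hP hl; cbv zeta.
set delta := (k%:R - 1) * eps / 2.
set Nr : R := (2 * k)%:R.
have hk : (2 : R) <= k%:R by rewrite (ler_nat R 2 k).
have NrE : Nr = 2 * k%:R by rewrite /Nr natrM.
have Nr0 : 0 < Nr by rewrite NrE; lra.
have Pnn : forall (a : 'I_(2 * k)) b, 0 <= P a.+1 b.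
  move=> a b; have [h _] := hP a.+1 (ltn_ord a); exact: h.
have Psum : forall (a : 'I_(2 * k)), \sum_b P a.+1 b = 1.
  move=> a; have [_ h] := hP a.+1 (ltn_ord a); exact: h.
have Pnnc : forall c b, (1 <= c <= k)%N -> 0 <= P c b + P (c + k)%N b.
  move=> c b hc; have [h1 _] := hP c (ltac:(lia)); have [h2 _] := hP (c + k)%N (ltac:(lia)).
  by rewrite addr_ge0.
pose x (a : 'I_(2 * k)) b := P a.+1 b / Nr.
pose s b := \sum_(a : 'I_(2 * k)) x a b.
have xnn : forall a b, 0 <= x a b by move=> a b; rewrite divr_ge0 // ltW.
have Fs : \sum_b s b = 1.
  rewrite /s exchange_big /=.
  rewrite (eq_bigr (fun _ => Nr^-1)); last by move=> a _; rewrite /x -mulr_suml Psum mul1r.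
  by rewrite sumr_const card_ord -mulr_natr mulVf // gt_eqF.
have hHA : entropy (fun a : 'I_(2 * k) => \sum_b P a.+1 b / Nr) = 1 + log2 k%:R.
  rewrite /entropy (eq_bigr (fun _ => negxlogx Nr^-1)); last first.
    by move=> a _; rewrite -mulr_suml Psum mul1r.
  rewrite sumr_const card_ord negxlogxE log2V // mulrN opprK.
  have e : forall y : R, y *+ (2 * k) = y * Nr by move=> y; rewrite /Nr mulr_natr.
  rewrite e.
  rewrite mulrAC mulVf ?gt_eqF // mul1r NrE log2M ?log2_2 //; lra.
pose z c b := P c b + P (c + k)%N b.
have ex : forall b, exists c, [/\ (1 <= c <= k)%N &
    (forall c', (1 <= c' <= k)%N -> z c' b <= z c b)].
  move=> b; have [m [hm hmax]] := max_exists (fun c => z c b) k.-1.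
  have kk : k.-1.+1 = k by lia.
  rewrite kk in hm hmax; by exists m.
case: (choice ex) => cs hcs.
have zsumE : forall b, \sum_(1 <= c < k.+1) z c b = Nr * s b.
  move=> b; rewrite /z (sum_split2 (fun c => P c b)) /s /x -mulr_suml.
  by rewrite mulrC divfK // gt_eqF.
have key : \sum_b (\sum_(1 <= c < k.+1) z c b - z (cs b) b) * 2
    <= (k%:R - 1) * Nr * eps.
  apply: (@le_trans _ _ (\sum_b \sum_(1 <= r < k) (\sum_(1 <= c < k.+1) z c b
      - `|\sum_(1 <= a < r.+1) z a b - \sum_(r.+1 <= a < k.+1) z a b|))).
    apply: ler_sum => b _; rewrite mulrC.
    have [h1 h2] := hcs b.
    by apply: (comb (z := fun c => z c b)) => // c hc; apply: Pnnc.
  rewrite exchange_big /=.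
  apply: (@le_trans _ _ (\sum_(1 <= r < k) (Nr * eps))).
    apply: ler_sum_nat => r hr.
    rewrite sumrB (eq_bigr (fun b => Nr * s b)); last by move=> b _; rewrite zsumE.
    rewrite -mulr_sumr Fs mulr1.
    have h := hl r (ltac:(lia)); rewrite /l1norm div1r -/Nr ler_pdivlMl // in h.
    rewrite /z; lra.
  rewrite sumr_const_nat -[_ *+ (k - 1)]mulr_natr natrB; last by lia.
  by rewrite le_eqVlt; apply/orP; left; apply/eqP; ring.
pose inC (a : 'I_(2 * k)) b := (a.+1 == cs b) || (a.+1 == (cs b + k)%N).
pose m b := \sum_a (if inC a b then x a b else 0).
have mE : forall b, m b = z (cs b) b / Nr.
  move=> b; have [h1 _] := hcs b.
  by rewrite /m /x (sum_pair_ord (fun c => P c b / Nr)) // /z mulrDl.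
have smE : forall b, s b - m b = \sum_a (if inC a b then 0 else x a b).
  move=> b; rewrite /s /m -sumrB; apply: eq_bigr => a _.
  by case: ifP => _; rewrite ?subrr ?subr0.
have smnn : forall b, 0 <= s b - m b.
  by move=> b; rewrite smE; apply: sumr_ge0 => a _; case: ifP.
pose M := \sum_b m b.
have M1 : M <= 1.
  rewrite -Fs; apply: ler_sum => b _; have := smnn b; lra.
have ZM : \sum_b z (cs b) b = Nr * M.
  have -> : M = \sum_b z (cs b) b / Nr by apply: eq_bigr => b _; rewrite mE.
  by rewrite -mulr_suml mulrC divfK // gt_eqF.
have Mlo : 1 - delta <= M.
  rewrite -mulr_suml sumrB ZM (eq_bigr (fun b => Nr * s b)) in key; last first.
    by move=> b _; rewrite zsumE.
  rewrite -mulr_sumr Fs mulr1 in key.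
  have hd : Nr * delta * 2 = (k%:R - 1) * Nr * eps by rewrite /delta; field.
  rewrite -(ler_pM2l Nr0); lra.
have k1 : 1 <= k%:R - 1 :> R by lra.
have dlt : delta < 1 / 2.
  have h : eps * (k%:R - 1) < 1 by rewrite -ltr_pdivlMr //; lra.
  rewrite /delta; lra.
have d0 : 0 <= delta by lra.
set u : R := (1 - delta) / 2.
set v : R := delta / (2 * (k%:R - 1)).
have u0 : 0 < u by rewrite /u; lra.
have v0 : 0 <= v by rewrite /v divr_ge0 //; lra.
pose q a b := if inC a b then u else v.
have dzero : delta = 0 -> forall a b, ~~ inC a b -> x a b = 0.
  move=> dz a b ha.
  have hs : \sum_b (s b - m b) = 0.
    rewrite sumrB Fs -/M; apply/eqP; rewrite eq_le; apply/andP; split; lra.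
  have hb : s b - m b = 0.
    by apply: (psumr_eq0P (P := xpredT) (F := fun b => s b - m b)) => // b' _; apply: smnn.
  rewrite smE in hb.
  have := psumr_eq0P (P := xpredT) (F := fun a => if inC a b then 0 else x a b).
  move=> /(_ _ hb a isT); rewrite (negbTE ha); apply.
  by move=> a' _ /=; case: ifP.
have qsum : forall b, \sum_a q a b = 1.
  move=> b; have [h1 _] := hcs b.
  rewrite (eq_bigr (fun a : 'I_(2 * k) => v + (if inC a b then u - v else 0))); last first.
    by move=> a _; rewrite /q; case: ifP => _; rewrite ?addr0 // addrC subrK.
  rewrite big_split /= sumr_const card_ord.
  rewrite (sum_pair_ord (fun _ => u - v)) //.
  rewrite -mulr_natr -/Nr NrE /u /v; field; lra.
have xle : forall a b, x a b <= s b.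
  move=> a b; rewrite /s (bigD1 a) //= lerDl; apply: sumr_ge0 => a' _; exact: xnn.
have qpos : forall a b, 0 < x a b -> 0 < q a b.
  move=> a b xp; rewrite /q; case: ifP => h //.
  have [dz|dp] := eqVneq delta 0.
    by rewrite (dzero dz a b (negbT h)) ltxx in xp.
  rewrite /v divr_gt0 //; last lra.
  by rewrite lt_def dp d0.
have per_b : forall b, \sum_a negxlogx (x a b) <=
    negxlogx (s b) + (- log2 v) * s b + (- log2 u - - log2 v) * m b.
  move=> b.
  apply: (@le_trans _ _ (\sum_a - (x a b * log2 (s b * q a b)))).
    rewrite (eq_bigr (fun a => - (x a b * log2 (x a b)))); last first.
      by move=> a _; rewrite negxlogxE.
    apply: gibbs.
    - by move=> a; exact: xnn.
    - move=> a; apply: mulr_ge0; first exact: (le_trans (xnn a b) (xle a b)).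
      by rewrite /q; case: ifP => _; lra.
    - move=> a xp; apply: mulr_gt0; first exact: (lt_le_trans xp (xle a b)).
      exact: qpos.
    - by rewrite -mulr_sumr qsum mulr1.
  rewrite (eq_bigr (fun a => - (x a b * log2 (s b)) + (- log2 v * x a b
      + (- log2 u - - log2 v) * (if inC a b then x a b else 0)))); last first.
    move=> a _; have [x0|xp] := eqVneq (x a b) 0.
      by rewrite x0; case: ifP => _; ring.
    have xp' : 0 < x a b by rewrite lt_def xp xnn.
    rewrite log2M; last exact: qpos; last exact: (lt_le_trans xp' (xle a b)).
    by rewrite /q; case: ifP => _; ring.
  rewrite big_split big_split /= sumrN -mulr_suml -!mulr_sumr negxlogxE.
  rewrite -/(s b) -/(m b); lra.
have hAB : entropy (fun ab : 'I_(2 * k) * 'I_d => P ab.1.+1 ab.2 / Nr)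
    <= entropy (fun b => \sum_(a : 'I_(2 * k)) P a.+1 b / Nr)
       + (- log2 v) + (- log2 u - - log2 v) * M.
  have e : \sum_(t : 'I_(2 * k) * 'I_d) negxlogx (P t.1.+1 t.2 / Nr)
      = \sum_(a : 'I_(2 * k)) \sum_b negxlogx (P a.+1 b / Nr) by rewrite pair_big.
  rewrite /entropy /= e exchange_big /=.
  apply: (le_trans (ler_sum _ (fun b _ => per_b b))).
  rewrite !big_split /= -!mulr_sumr Fs mulr1. rewrite -/M; exact: lexx.
have hf := final_ineq d0 dlt Mlo M1 k1.
rewrite -/u -/v in hf.
rewrite /mutinfo hHA; lra.
Qed.
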